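(* Let $n,m$ be positive integers, $\Lambda:\mathbb{C}^{n\times n}\to\mathbb{C}^{m\times m}$ linear and $Y\in\mathbb{C}^{m\times m}$. For a real parameter $k\ge1$, call a pair $(\Phi_I,\Phi_V)$ of Hermitian operators on $\mathcal{H}_{A_1}\otimes\mathcal{H}_{B_1}=\mathbb{C}^n\otimes\mathbb{C}^n$ $k$-feasible if \[ \Phi_V=V\Phi_I,\quad \Phi_I+\Phi_V\ge0,\quad \Phi_I-\Phi_V\ge0,\quad \Phi_I^{T_{A_1}}+k\Phi_V^{T_{A_1}}\ge0,\quad \Phi_I^{T_{A_1}}\ge0, \] \[ k^2\operatorname{Tr}(\Phi_I)+k\operatorname{Tr}(\Phi_V)=1,\qquad (\Lambda_{A_1}\otimes\mathrm{id}_{B_1})(k\Phi_I+\Phi_V)=Y\otimes\operatorname{Tr}_{A_1}(k\Phi_I+\Phi_V). \] If $(\Phi_I,\Phi_V)$ is $k$-feasible with $k\ge1$, then for every real $k'\ge k$ there is a $k'$-feasible pair $(\Phi_I',\Phi_V')$ with $k'^2\Phi_I'+k'\Phi_V'=k^2\Phi_I+k\Phi_V$.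
   Context: $V$ is the swap operator on $\mathbb{C}^n\otimes\mathbb{C}^n$; $T_{A_1}$ denotes the partial transpose on the first factor; $\operatorname{Tr}_{A_1}$ is the partial trace over the first factor; $\Lambda_{A_1}\otimes\mathrm{id}_{B_1}$ applies $\Lambda$ to the first factor; $\ge0$ means positive semidefinite. (This is the symmetry-reduced second level of the hierarchy with partial-transpose constraints, in which the rank bound $k$ appears as a parameter.) *)

(* Defs.v *)
(* Bipartite operators on C^p (x) C^q are matrices
   'M_(p * q), with the basis vector |a> (x) |b> at index
   mxtens_index (a, b) (the convention of real_closed/mxtens.v, i.e. of the
   Kronecker product  A *t B). *)
From HB Require Import structures.
From mathcomp Require Import all_boot all_order all_algebra.
From mathcomp Require Import reals.
From mathcomp Require Import complex mxtens.

Set Implicit Arguments.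
Unset Strict Implicit.
Unset Printing Implicit Defensive.

Import Order.TTheory GRing.Theory Num.Theory.
Local Open Scope ring_scope.

Section Defs.
Variable C : numClosedFieldType.

Definition adjmx p q (A : 'M[C]_(p, q)) : 'M[C]_(q, p) := (map_mx Num.conj A)^T.

Definition hermitian p (A : 'M[C]_p) : Prop := adjmx A = A.

Definition psd p (A : 'M[C]_p) : Prop :=
  hermitian A /\ forall v : 'cV[C]_p, 0 <= (adjmx v *m A *m v) 0 0.

Local Notation idx := (@mxtens_index _ _).
Local Notation unidx := (@mxtens_unindex _ _).

Definition swapmx n : 'M[C]_(n * n) :=
  \matrix_(i, j) ((((unidx i).1 == (unidx j).2) &&
                   ((unidx i).2 == (unidx j).1))%:R : C).

Definition ptransA p q (X : 'M[C]_(p * q)) : 'M[C]_(p * q) :=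
  \matrix_(i, j) X (idx ((unidx j).1, (unidx i).2))
                   (idx ((unidx i).1, (unidx j).2)).

Definition ptraceA p q (X : 'M[C]_(p * q)) : 'M[C]_q :=
  \matrix_(b, d) \sum_(a < p) X (idx (a, b)) (idx (a, d)).

Definition mapA p q r (L : 'M[C]_p -> 'M[C]_r) (X : 'M[C]_(p * q))
  : 'M[C]_(r * q) :=
  \matrix_(i, j) \sum_(a < p) \sum_(c < p)
     L (delta_mx a c) (unidx i).1 (unidx j).1 *
     X (idx (a, (unidx i).2)) (idx (c, (unidx j).2)).

Definition feasible n m (L : 'M[C]_n -> 'M[C]_m) (Y : 'M[C]_m) (k : C)
    (PhiI PhiV : 'M[C]_(n * n)) : Prop :=
  [/\ hermitian PhiI /\ hermitian PhiV,
      PhiV = swapmx n *m PhiI,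
      [/\ psd (PhiI + PhiV), psd (PhiI - PhiV),
          psd (ptransA PhiI + k *: ptransA PhiV) & psd (ptransA PhiI)],
      k ^+ 2 * \tr PhiI + k * \tr PhiV = 1 &
      mapA L (k *: PhiI + PhiV) = Y *t ptraceA (k *: PhiI + PhiV)].

End Defs.

(* Main.v *)
Require Import Defs.
From HB Require Import structures.
From mathcomp Require Import all_boot all_order all_algebra.
From mathcomp Require Import reals.
From mathcomp Require Import complex mxtens.
From mathcomp Require Import ring lra.
Import Order.TTheory GRing.Theory Num.Theory.
Local Open Scope ring_scope.

Ltac ent := apply/matrixP => ? ?; rewrite !mxE;
  rewrite !(rmorphD, rmorphB, rmorphM, fmorphV, rmorphXn, rmorph1, rmorphN, rmorph0) /=;
  field; do ?[apply/andP; split]; try assumption.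

Section Aux.
Variable R : realType.
Local Notation C := R[i].

Lemma cR (x : R) : Num.conj (x%:C)%C = (x%:C)%C :> C.
Proof. exact: conjc_real. Qed.

Lemma herm_comb p (A B : 'M[C]_p) (x y : R) :
  Defs.hermitian A -> Defs.hermitian B -> Defs.hermitian ((x%:C)%C *: A + (y%:C)%C *: B).
Proof.
rewrite /Defs.hermitian /adjmx => hA hB; rewrite -{2}hA -{2}hB.
by apply/matrixP=> i j; rewrite !mxE rmorphD !rmorphM /= !cR.
Qed.

Lemma psd_comb p (A B : 'M[C]_p) (x y : R) :
  psd A -> psd B -> 0 <= x -> 0 <= y -> psd ((x%:C)%C *: A + (y%:C)%C *: B).
Proof.
move=> [hA pA] [hB pB] hx hy; split; first exact: herm_comb.
move=> v; move: (pA v) (pB v); rewrite mulmxDr mulmxDl -!scalemxAr -!scalemxAl !mxE => a b.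
by rewrite addr_ge0 // mulr_ge0 // ?ler0c.
Qed.

Lemma swapmx2 n : @swapmx C n *m @swapmx C n = 1%:M :> 'M[C]_(n * n).
Proof.
apply/matrixP=> i j; rewrite !mxE.
rewrite (reindex (@mxtens_index n n)) /=; last first.
  by apply: onW_bij; exact: (Bijective (@mxtens_indexK n n) (@mxtens_unindexK n n)).
under eq_bigr => p _ do rewrite !mxE mxtens_indexK.
rewrite -(can_eq (@mxtens_unindexK n n)).
case: (mxtens_unindex i) => a b; case: (mxtens_unindex j) => c d /=.
rewrite (bigD1 (b, a)) //= big1 ?addr0; last first.
  move=> [p1 p2] /= hp.
  case: (boolP (a == p2)) => [/eqP E2|]; case: (boolP (b == p1)) => [/eqP E1|] //=;
    rewrite ?mul0r //.
  by rewrite E1 E2 eqxx in hp.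
by rewrite !eqxx mul1r xpair_eqE andbC.
Qed.


Lemma mapAZ p q r (Lf : 'M[C]_p -> 'M[C]_r) (c : C) (X : 'M[C]_(p * q)) :
  mapA Lf (c *: X) = c *: mapA Lf X.
Proof.
apply/matrixP=> i j; rewrite !mxE mulr_sumr; apply: eq_bigr => a _.
rewrite mulr_sumr; apply: eq_bigr => b _; by rewrite !mxE mulrCA.
Qed.

Lemma ptraceAZ p q (c : C) (X : 'M[C]_(p * q)) :
  ptraceA (c *: X) = c *: ptraceA X.
Proof.
apply/matrixP=> i j; rewrite !mxE mulr_sumr; apply: eq_bigr => a _.
by rewrite !mxE.
Qed.

Lemma tensmxZ m p (Y : 'M[C]_m) (c : C) (X : 'M[C]_p) :
  Y *t (c *: X) = c *: (Y *t X).
Proof. by apply/matrixP=> i j; rewrite !mxE mulrCA. Qed.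


Lemma ptransA_comb p q (x y : C) (A B : 'M[C]_(p * q)) :
  ptransA (x *: A + y *: B) = x *: ptransA A + y *: ptransA B.
Proof. by apply/matrixP=> i j; rewrite !mxE. Qed.

End Aux.

Theorem mainTheorem12 (R : realType) (n m : nat) (n_gt0 : (0 < n)%N)
    (m_gt0 : (0 < m)%N) (L : {linear 'M[R[i]]_n -> 'M[R[i]]_m})
    (Y : 'M[R[i]]_m) (k : R) (PhiI PhiV : 'M[R[i]]_(n * n)) :
  1 <= k ->
  feasible L Y (k%:C)%C PhiI PhiV ->
  forall k' : R, k <= k' ->
  exists PhiI' PhiV' : 'M[R[i]]_(n * n),
    feasible L Y (k'%:C)%C PhiI' PhiV' /\
    (k'%:C)%C ^+ 2 *: PhiI' + (k'%:C)%C *: PhiV'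
    = (k%:C)%C ^+ 2 *: PhiI + (k%:C)%C *: PhiV.
Proof.
move=> hk [[hI hV] hVdef [p1 p2 p3 p4] htr hmap] k' hkk'.
case: (eqVneq k' k) => [->|neq].
  by exists PhiI, PhiV; split => //; split.
have lt : k < k' by rewrite lt_neqAle eq_sym neq hkk'.
have k'1 : 1 < k' by apply: le_lt_trans lt.
have nz1 : (k'%:C)%C != 0 :> R[i] by rewrite fmorph_eq0 gt_eqF // (lt_trans ltr01).
have nz2 : (k'%:C)%C - 1 != 0 :> R[i].
  by rewrite -(rmorph1 (real_complex R)) -rmorphB fmorph_eq0 subr_eq0 gt_eqF.
have nz3 : (k'%:C)%C + 1 != 0 :> R[i].
  by rewrite -(rmorph1 (real_complex R)) -rmorphD fmorph_eq0 gt_eqF // ltr_wpDl // ltW // (lt_trans ltr01).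
have nz4 : (k%:C)%C != 0 :> R[i] by rewrite fmorph_eq0 gt_eqF // (lt_le_trans ltr01).
have nz5 : (k'%:C)%C * (k'%:C)%C - 1 != 0 :> R[i].
  have -> : (k'%:C)%C * (k'%:C)%C - 1 = ((k'%:C)%C - 1) * ((k'%:C)%C + 1) :> R[i] by ring.
  by rewrite mulf_neq0.
pose a := k * (k * k' - 1) / (k' * (k' ^+ 2 - 1)).
pose b := k * (k' - k) / (k' * (k' ^+ 2 - 1)).
exists ((a%:C)%C *: PhiI + (b%:C)%C *: PhiV), ((b%:C)%C *: PhiI + (a%:C)%C *: PhiV).

have mainEq : (k'%:C)%C ^+ 2 *: ((a%:C)%C *: PhiI + (b%:C)%C *: PhiV) +
     (k'%:C)%C *: ((b%:C)%C *: PhiI + (a%:C)%C *: PhiV)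
    = (k%:C)%C ^+ 2 *: PhiI + (k%:C)%C *: PhiV.
  by rewrite /a /b; ent.
split; last exact: mainEq.
have VV : swapmx _ n *m PhiV = PhiI by rewrite hVdef mulmxA swapmx2 mul1mx.
have k0 : 0 <= k by apply: le_trans hk.
have k'0 : 0 <= k' by apply: le_trans hkk'.
have q1 : 0 <= k + 1 by rewrite addr_ge0.
have q2 : 0 <= k - 1 by rewrite subr_ge0.
have q3 : 0 <= k' + 1 by rewrite addr_ge0.
have q4 : 0 <= k' - 1 by rewrite subr_ge0 ltW.
have q5 : 0 <= k ^+ 2 - 1 by rewrite subr_ge0 expr_ge1.
have q6 : 0 <= k' ^+ 2 - 1 by rewrite subr_ge0 expr_ge1 // ltW.
have q7 : 0 <= k' - k by rewrite subr_ge0.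
split.
- by split; apply: herm_comb.
- by rewrite mulmxDr -!scalemxAr VV -hVdef addrC.
- rewrite !ptransA_comb.
  move: p3 p4; set TI := ptransA PhiI; set TV := ptransA PhiV => p3 p4.
  clearbody TI TV.
  split.
  + have -> : (a%:C)%C *: PhiI + (b%:C)%C *: PhiV + ((b%:C)%C *: PhiI + (a%:C)%C *: PhiV)
      = ((k * (k + 1) / (k' * (k' + 1)))%:C)%C *: (PhiI + PhiV) + ((0:R)%:C)%C *: (PhiI + PhiV) by rewrite /a /b; ent.
    by apply: (@psd_comb _ _ _ _ _ _ p1 p1); (try apply: divr_ge0); rewrite ?mulr_ge0.
  + have -> : (a%:C)%C *: PhiI + (b%:C)%C *: PhiV - ((b%:C)%C *: PhiI + (a%:C)%C *: PhiV)
      = ((k * (k - 1) / (k' * (k' - 1)))%:C)%C *: (PhiI - PhiV) + ((0:R)%:C)%C *: (PhiI - PhiV) by rewrite /a /b; ent.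
    by apply: (@psd_comb _ _ _ _ _ _ p2 p2); (try apply: divr_ge0); rewrite ?mulr_ge0.
  + have -> : (a%:C)%C *: TI + (b%:C)%C *: TV + (k'%:C)%C *: ((b%:C)%C *: TI + (a%:C)%C *: TV)
      = ((k / k')%:C)%C *: (TI + (k%:C)%C *: TV) + ((0:R)%:C)%C *: (TI + (k%:C)%C *: TV) by rewrite /a /b; ent.
    by apply: (@psd_comb _ _ _ _ _ _ p3 p3); (try apply: divr_ge0); rewrite ?mulr_ge0.
  + have -> : (a%:C)%C *: TI + (b%:C)%C *: TV
      = (((k ^+ 2 - 1) / (k' ^+ 2 - 1))%:C)%C *: TI + (((k' - k) / (k' * (k' ^+ 2 - 1)))%:C)%C *: (TI + (k%:C)%C *: TV) by rewrite /a /b; ent.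
    by apply: (@psd_comb _ _ _ _ _ _ p4 p3); (try apply: divr_ge0); rewrite ?mulr_ge0.
- by rewrite -!mxtraceZ -mxtraceD mainEq mxtraceD !mxtraceZ.
- have -> : (k'%:C)%C *: ((a%:C)%C *: PhiI + (b%:C)%C *: PhiV) + ((b%:C)%C *: PhiI + (a%:C)%C *: PhiV)
    = ((k / k')%:C)%C *: ((k%:C)%C *: PhiI + PhiV) by rewrite /a /b; ent.
  by rewrite mapAZ ptraceAZ tensmxZ hmap.
Qed.
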